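(* Assume $\rho_\alpha^{\mathrm{dir}}<1$ and fix $\varepsilon>0$ such that $\beta_\varepsilon:=\rho_\alpha^{\mathrm{dir}}+\varepsilon<1$. For integers $t\ge 0$ and $x\in\mathbb R^m$ define \[ V_\varepsilon^t(x):=\sum_{\ell=0}^{t}\beta_\varepsilon^{-2\ell}\max_{\pi_1,\dots,\pi_\ell\in\Theta}\big\|A_{\pi_\ell}\cdots A_{\pi_1}x\big\|_2^2, \] where the $\ell=0$ term is $\|x\|_2^2$, and $V_\varepsilon^\infty(x):=\lim_{t\to\infty}V_\varepsilon^t(x)$. Then the following hold. (i) $V_\varepsilon^\infty$ is well defined, and there exists $C_\varepsilon\ge 1$ such that $\|x\|_2^2\le V_\varepsilon^\infty(x)\le C_\varepsilon\|x\|_2^2$ for all $x\in\mathbb R^m$. (ii) $p_\varepsilon(x):=\sqrt{V_\varepsilon^\infty(x)}$ is a norm on $\mathbb R^m$. (iii) For every stochastic policy $\mu$ and every $x\in\mathbb R^m$, \[ V_\varepsilon^\infty(A_\mu x)\le \beta_\varepsilon^2\big(V_\varepsilon^\infty(x)-\|x\|_2^2\big)\le \beta_\varepsilon^2 V_\varepsilon^\infty(x). \] Consequently $p_\varepsilon(A_\mu x)\le\beta_\varepsilon p_\varepsilon(x)$ for all $x\in\mathbb R^m$. (iv) $T_\alpha$ is a global contraction in $p_\varepsilon$: $p_\varepsilon(T_\alpha(\theta)-T_\alpha(\bar\theta))\le\beta_\varepsilon p_\varepsilon(\theta-\bar\theta)$ for all $\theta,\bar\theta\in\mathbb R^m$.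 (v) Hence there exists a unique projected Bellman fixed point $\theta^\star$, that is, a unique $\theta^\star$ with $g(\theta^\star)=0$. (vi) For the deterministic recursion $\theta_{k+1}=T_\alpha(\theta_k)$, $k\ge 0$, started from any $\theta_0\in\mathbb R^m$, we have \[ V_\varepsilon^\infty(\theta_k-\theta^\star)\le\beta_\varepsilon^{2k}V_\varepsilon^\infty(\theta_0-\theta^\star), \] \[ \|\theta_k-\theta^\star\|_2\le\sqrt{C_\varepsilon}\,\beta_\varepsilon^k\|\theta_0-\theta^\star\|_2, \] \[ \|\Phi\theta_k-\Phi\theta^\star\|_2\le\|\Phi\|_2\sqrt{C_\varepsilon}\,\beta_\varepsilon^k\|\theta_0-\theta^\star\|_2. \]
   Context: Consider a finite discounted MDP with state space $\mathcal S=\{1,\dots,|\mathcal S|\}$, action space $\mathcal A=\{1,\dots,|\mathcal A|\}$, transition probabilities $P(s'\mid s,a)$, real rewards $r(s,a,s')$, expected reward $R(s,a)=\sum_{s'}P(s'\mid s,a)r(s,a,s')$, and discount factor $\gamma\in(0,1)$. State-action vectors are ordered as $(1,1),(2,1),\dots,(|\mathcal S|,1),(1,2),\dots,(|\mathcal S|,|\mathcal A|)$. The matrix $P\in\mathbb R^{|\mathcal S||\mathcal A|\times|\mathcal S|}$ has row $(s,a)$ equal to $P(\cdot\mid s,a)$, and $R\in\mathbb R^{|\mathcal S||\mathcal A|}$ has entries $R(s,a)$. A stochastic policy is a map $\mu:\mathcal S\to\Delta_{|\mathcal A|}$, where $\Delta_n$ is the probability simplex in $\mathbb R^n$. The set $\Theta$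 is the finite set of deterministic stationary policies $\pi:\mathcal S\to\mathcal A$; each is identified with the stochastic policy putting mass $1$ on $\pi(s)$. For a stochastic policy $\mu$, $\Pi^\mu\in\mathbb R^{|\mathcal S|\times|\mathcal S||\mathcal A|}$ is the matrix with entry $\mu(a\mid s)$ in row $s$ and column $(s,a)$, and zeros elsewhere. The feature matrix $\Phi\in\mathbb R^{|\mathcal S||\mathcal A|\times m}$ has full column rank and rows $\phi(s,a)^\top$. For $\theta\in\mathbb R^m$, $V_\theta\in\mathbb R^{|\mathcal S|}$ is defined by $V_\theta(s)=\max_{a}\phi(s,a)^\top\theta$. The sampling distribution $d$ on $\mathcal S\times\mathcal A$ satisfies $d(s,a)>0$ for all $(s,a)$, and $D=\mathrm{diag}(d(s,a))$ in the same ordering. The step size is $\alpha\in(0,1)$. Define the projected Bellman residual $g(\theta):=\Phi^\top D(R+\gamma PV_\theta-\Phi\theta)$ and the map $T_\alpha(\theta):=\theta+\alpha g(\theta)$. A projected Bellman fixed point is a $\theta^\star$ with $g(\theta^\star)=0$. For a stochastic policy $\mu$, define $A_\mu:=I-\alpha\Phi^\top D\Phi+\alpha\gamma\Phi^\top DP\Pi^\mu\Phi\in\mathbb R^{m\times m}$, and let $\mathcal A_\alpha:=\{A_\pi:\pi\in\Theta\}$. The joint spectral radius of a bounded set $\mathcal H$ of square matrices is $\mathrm{JSR}(\mathcal H):=\lim_{k\to\infty}\sup_{B_1,\dots,B_k\in\mathcal H}\|B_k\cdots B_1\|^{1/k}$. Set $\rho_\alpha^{\mathrm{dir}}:=\mathrm{JSR}(\mathcal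 A_\alpha)$. *)

(* Defs.v *)
From HB Require Import structures.
From mathcomp Require Import all_boot all_order all_algebra.
From mathcomp Require Import all_classical all_reals all_analysis.
Set Implicit Arguments. Unset Strict Implicit. Unset Printing Implicit Defensive.
Import Order.TTheory GRing.Theory Num.Theory.
Import numFieldNormedType.Exports.
Local Open Scope classical_set_scope.
Local Open Scope ring_scope.

(* Conventions.
   - States: 'I_nS ; actions: 'I_nA.+1 (the action space is nonempty).
   - State-action pairs are indexed by 'I_(nA.+1 * nS), the pair (s,a)
     having index  mxvec_index a s = a * nS + s, which is exactly the
     ordering (1,1),(2,1),...,(|S|,1),(1,2),... of the paper.
   - Vectors of R^n are column vectors 'cV[R]_n. *)

Section Defs.
Variable R : realType.

Definition norm2sq n (x : 'cV[R]_n) : R := \sum_(i < n) (x i 0) ^+ 2.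
Definition norm2 n (x : 'cV[R]_n) : R := Num.sqrt (norm2sq x).

Definition opnorm2 p q (M : 'M[R]_(p, q)) : R :=
  sup [set norm2 (M *m x) | x in [set x : 'cV[R]_q | norm2 x <= 1]].

Definition is_norm m (p : 'cV[R]_m -> R) : Prop :=
  [/\ forall x, 0 <= p x,
      forall x, p x = 0 -> x = 0,
      forall (c : R) x, p (c *: x) = `|c| * p x &
      forall x y, p (x + y) <= p x + p y].

Definition sa_idx nS nA (s : 'I_nS) (a : 'I_nA.+1) : 'I_(nA.+1 * nS) :=
  mxvec_index a s.

Definition is_stoch_policy nS nA (mu : 'I_nS -> 'I_nA.+1 -> R) : Prop :=
  (forall s a, 0 <= mu s a) /\ (forall s, \sum_(a < nA.+1) mu s a = 1).

Definition detpol nS nA := {ffun 'I_nS -> 'I_nA.+1}.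

Definition det_to_stoch nS nA (pi : detpol nS nA) : 'I_nS -> 'I_nA.+1 -> R :=
  fun s a => (a == pi s)%:R.

Definition PiMat nS nA (mu : 'I_nS -> 'I_nA.+1 -> R) : 'M[R]_(nS, nA.+1 * nS) :=
  \matrix_(s < nS, k < nA.+1 * nS)
     \sum_(a < nA.+1) (if k == sa_idx s a then mu s a else 0).

Definition Rexp nS nA (P : 'M[R]_(nA.+1 * nS, nS))
  (r : 'I_(nA.+1 * nS) -> 'I_nS -> R) : 'cV[R]_(nA.+1 * nS) :=
  \col_k \sum_(s' < nS) P k s' * r k s'.

Definition Dmat N (d : 'I_N -> R) : 'M[R]_N := diag_mx (\row_k d k).

Definition Vtheta nS nA m (Phi : 'M[R]_(nA.+1 * nS, m)) (theta : 'cV[R]_m)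
  : 'cV[R]_nS :=
  \col_s \big[Num.max/(Phi *m theta) (sa_idx s ord0) 0]_(a < nA.+1)
            (Phi *m theta) (sa_idx s a) 0.

Definition gres nS nA m (P : 'M[R]_(nA.+1 * nS, nS))
  (r : 'I_(nA.+1 * nS) -> 'I_nS -> R) (gamma : R)
  (Phi : 'M[R]_(nA.+1 * nS, m)) (d : 'I_(nA.+1 * nS) -> R)
  (theta : 'cV[R]_m) : 'cV[R]_m :=
  Phi^T *m Dmat d *m (Rexp P r + gamma *: (P *m Vtheta Phi theta) - Phi *m theta).

Definition Talpha nS nA m P r gamma Phi d (alpha : R) (theta : 'cV[R]_m) :=
  theta + alpha *: @gres nS nA m P r gamma Phi d theta.

Definition Amu nS nA m (P : 'M[R]_(nA.+1 * nS, nS)) (gamma : R)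
  (Phi : 'M[R]_(nA.+1 * nS, m)) (d : 'I_(nA.+1 * nS) -> R) (alpha : R)
  (mu : 'I_nS -> 'I_nA.+1 -> R) : 'M[R]_m :=
  1%:M - alpha *: (Phi^T *m Dmat d *m Phi)
       + (alpha * gamma) *: (Phi^T *m Dmat d *m P *m PiMat mu *m Phi).

(* A_{pi_l} ... A_{pi_1} for the sequence pi_1 = f 0, ..., pi_l = f (l-1) *)
Definition prodA nS nA m P gamma Phi d alpha l
  (f : {ffun 'I_l -> detpol nS nA}) : 'M[R]_m :=
  \prod_(i < l) @Amu nS nA m P gamma Phi d alpha (det_to_stoch (f (rev_ord i))).

(* joint spectral radius of A_alpha = {A_pi : pi in Theta} (w.r.t. the
   operator 2-norm; the sup over the finite set of products is a max) *)
Definition rho_dir nS nA m P gamma Phi d alpha : R :=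
  limn (fun k : nat =>
    (\big[Num.max/0]_(f : {ffun 'I_k -> detpol nS nA})
        opnorm2 (@prodA nS nA m P gamma Phi d alpha k f)) `^ (k%:R)^-1).

Definition Vt nS nA m P gamma Phi d alpha (beta : R) (t : nat)
  (x : 'cV[R]_m) : R :=
  \sum_(l < t.+1) beta ^- (2 * l) *
     \big[Num.max/0]_(f : {ffun 'I_l -> detpol nS nA})
        norm2sq (@prodA nS nA m P gamma Phi d alpha l f *m x).

Definition Vinf nS nA m P gamma Phi d alpha (beta : R) (x : 'cV[R]_m) : R :=
  limn (fun t => @Vt nS nA m P gamma Phi d alpha beta t x).

End Defs.

(* Main.v *)
Require Import Defs.
From HB Require Import structures.
From mathcomp Require Import all_boot all_order all_algebra.
From mathcomp Require Import all_classical all_reals all_analysis.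
Import Order.TTheory GRing.Theory Num.Theory.
Import numFieldNormedType.Exports.
Local Open Scope classical_set_scope.
Local Open Scope ring_scope.
From mathcomp Require Import ring lra.
Set Implicit Arguments. Unset Strict Implicit. Unset Printing Implicit Defensive.


Section P1.
Variable R : realType.

Lemma sumB3 (I : finType) (a b c : I -> R) (x y z : R) :
  \sum_i (x * a i + y * b i + z * c i) =
  x * \sum_i a i + y * \sum_i b i + z * \sum_i c i.
Proof. by rewrite !big_split /= !mulr_sumr. Qed.

Lemma CS (I : finType) (a b : I -> R) :
  (\sum_i a i * b i) ^+ 2 <= (\sum_i a i ^+ 2) * (\sum_i b i ^+ 2).
Proof.
set A := \sum_i a i ^+ 2; set B := \sum_i a i * b i; set C := \sum_i b i ^+ 2.
have A0 : 0 <= A by apply: sumr_ge0 => i _; exact: sqr_ge0.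
have H : 0 <= \sum_i (A * b i - B * a i) ^+ 2 by apply: sumr_ge0 => i _; exact: sqr_ge0.
have E : \sum_i (A * b i - B * a i) ^+ 2 =
   (A ^+ 2) * C + (- 2 * A * B) * B + (B ^+ 2) * A.
  rewrite -sumB3; apply: eq_bigr => i _; ring.
rewrite E in H.
have [Az|Ap] := eqVneq A 0.
  have ha : forall i, a i = 0.
    move=> i; apply/eqP; rewrite -sqrf_eq0; apply/eqP.
    by apply: (psumr_eq0P (P := predT) (fun i _ => sqr_ge0 (a i)) Az).
  have -> : B = 0 by rewrite /B big1 // => i _; rewrite ha mul0r.
  by rewrite Az expr0n /= mul0r.
have Ag : 0 < A by rewrite lt_def Ap A0.
have : 0 <= A * (A * C - B ^+ 2) by rewrite -[X in _ <= X]/(_) ; nra.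
by rewrite pmulr_rge0 // subr_ge0 mulrC.
Qed.

Lemma CS' (I : finType) (a b : I -> R) :
  \sum_i a i * b i <= Num.sqrt (\sum_i a i ^+ 2) * Num.sqrt (\sum_i b i ^+ 2).
Proof.
rewrite -sqrtrM; last by apply: sumr_ge0 => i _; exact: sqr_ge0.
apply: le_trans (ler_norm _) _.
rewrite -sqrtr_sqr ler_sqrt; first exact: CS.
by apply: mulr_ge0; apply: sumr_ge0 => i _; exact: sqr_ge0.
Qed.

Lemma mink (I : finType) (a b : I -> R) :
  \sum_i (a i + b i) ^+ 2 <=
  (Num.sqrt (\sum_i a i ^+ 2) + Num.sqrt (\sum_i b i ^+ 2)) ^+ 2.
Proof.
have A0 : 0 <= \sum_i a i ^+ 2 by apply: sumr_ge0 => i _; exact: sqr_ge0.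
have B0 : 0 <= \sum_i b i ^+ 2 by apply: sumr_ge0 => i _; exact: sqr_ge0.
have E : \sum_i (a i + b i) ^+ 2 = 1 * \sum_i a i ^+ 2 + 2 * \sum_i a i * b i
   + 1 * \sum_i b i ^+ 2.
  rewrite -sumB3; apply: eq_bigr => i _; ring.
rewrite E sqrrD !mul1r !sqr_sqrtr //.
have := @CS' I a b; lra.
Qed.

Lemma sqrt_mink (I : finType) (a b c : I -> R) :
  (forall i, 0 <= c i) -> (forall i, c i <= a i + b i) ->
  Num.sqrt (\sum_i c i ^+ 2) <=
  Num.sqrt (\sum_i a i ^+ 2) + Num.sqrt (\sum_i b i ^+ 2).
Proof.
move=> c0 cab.
rewrite -(ger0_norm (addr_ge0 (sqrtr_ge0 _) (sqrtr_ge0 _))) -sqrtr_sqr ler_sqrt;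
  last exact: sqr_ge0.
apply: le_trans (@mink I a b); apply: ler_sum => i _.
by rewrite ler_sqr ?nnegrE // (le_trans (c0 i)).
Qed.

Lemma norm2sq_ge0 n (x : 'cV[R]_n) : 0 <= norm2sq x.
Proof. by apply: sumr_ge0 => i _; exact: sqr_ge0. Qed.

Lemma norm2_ge0 n (x : 'cV[R]_n) : 0 <= norm2 x.
Proof. exact: sqrtr_ge0. Qed.

Lemma norm2_sq n (x : 'cV[R]_n) : norm2 x ^+ 2 = norm2sq x.
Proof. by rewrite sqr_sqrtr // norm2sq_ge0. Qed.

Lemma norm2sqZ n (c : R) (x : 'cV[R]_n) : norm2sq (c *: x) = c ^+ 2 * norm2sq x.
Proof. by rewrite /norm2sq mulr_sumr; apply: eq_bigr => i _; rewrite mxE exprMn. Qed.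

Lemma norm2Z n (c : R) (x : 'cV[R]_n) : norm2 (c *: x) = `|c| * norm2 x.
Proof. by rewrite /norm2 norm2sqZ sqrtrM ?sqr_ge0 // sqrtr_sqr. Qed.

Lemma norm2sq_eq0 n (x : 'cV[R]_n) : norm2sq x = 0 -> x = 0.
Proof.
move=> h; apply/matrixP => i j; rewrite (ord1 j) mxE.
apply/eqP; rewrite -sqrf_eq0; apply/eqP.
exact: (psumr_eq0P (P := predT) (fun i _ => sqr_ge0 (x i 0)) h).
Qed.

Lemma norm2sq0 n : norm2sq (0 : 'cV[R]_n) = 0.
Proof. by rewrite /norm2sq big1 // => i _; rewrite mxE expr0n. Qed.

Lemma norm2_0 n : norm2 (0 : 'cV[R]_n) = 0.
Proof. by rewrite /norm2 norm2sq0 sqrtr0. Qed.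

Lemma norm2_eq0 n (x : 'cV[R]_n) : norm2 x = 0 -> x = 0.
Proof.
move=> h; apply: norm2sq_eq0; by rewrite -norm2_sq h expr0n.
Qed.

Lemma norm2D n (x y : 'cV[R]_n) : norm2 (x + y) <= norm2 x + norm2 y.
Proof.
rewrite /norm2 /norm2sq.
have nk (z : 'cV[R]_n) : \sum_i z i 0 ^+ 2 = \sum_i `|z i 0| ^+ 2.
  by apply: eq_bigr => i _; rewrite real_normK ?num_real.
rewrite !nk.
apply: (@sqrt_mink _ (fun i => `|x i 0|) (fun i => `|y i 0|) (fun i => `|(x + y) i 0|)).
  by move=> i; exact: normr_ge0.
by move=> i; rewrite mxE; apply: (le_trans (ler_normD _ _)).
Qed.

Lemma coord_le_norm2 n (x : 'cV[R]_n) i : `|x i 0| <= norm2 x.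
Proof.
rewrite -sqrtr_sqr ler_sqrt ?norm2sq_ge0 // /norm2sq (bigD1 i) //= lerDl.
by apply: sumr_ge0 => j _; exact: sqr_ge0.
Qed.

Lemma norm2sq_coord_le n (x : 'cV[R]_n) (E : R) :
  (forall i, `|x i 0| <= E) -> norm2sq x <= n%:R * E ^+ 2.
Proof.
move=> h; apply: (@le_trans _ _ (\sum_(i < n) E ^+ 2)).
  apply: ler_sum => i _; rewrite -real_normK ?num_real // ler_sqr ?nnegrE //.
  exact: le_trans (normr_ge0 _) (h i).
by rewrite sumr_const card_ord mulr_natl.
Qed.

Lemma bmax_ge (I : finType) (F : I -> R) x0 i : F i <= \big[Num.max/x0]_j F j.
Proof. by rewrite (bigD1 i) //= le_max lexx. Qed.

Lemma bmax_le (I : finType) (F : I -> R) x0 c :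
  x0 <= c -> (forall i, F i <= c) -> \big[Num.max/x0]_j F j <= c.
Proof.
move=> h1 h2; apply: (big_ind (fun y => y <= c)) => //.
by move=> a b ha hb; rewrite ge_max ha hb.
Qed.

Lemma bmax_gex0 (I : finType) (F : I -> R) x0 : x0 <= \big[Num.max/x0]_j F j.
Proof.
elim/big_rec: _ => // i y _ h; by rewrite le_max h orbT.
Qed.

Lemma bmax_ex (I : finType) (F : I -> R) i0 :
  exists i, \big[Num.max/F i0]_j F j = F i.
Proof.
apply: (big_ind (fun y => exists i, y = F i)); first by exists i0.
  move=> a b [i ->] [j ->]; case: (leP (F i) (F j)) => h.
    by exists j.
  by exists i.
by move=> i _; exists i.
Qed.

Lemma bmax_scale (I : finType) (F : I -> R) c : 0 <= c ->
  \big[Num.max/0]_j (c * F j) = c * \big[Num.max/0]_j F j.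
Proof.
move=> c0; apply/eqP; rewrite eq_le; apply/andP; split.
  apply: bmax_le; first by rewrite mulr_ge0 // bmax_gex0.
  by move=> i; rewrite ler_wpM2l // bmax_ge.
have [->|cn] := eqVneq c 0; first by rewrite mul0r bmax_gex0.
have cp : 0 < c by rewrite lt_def cn c0.
rewrite -ler_pdivlMl //; apply: bmax_le; first by rewrite mulr_ge0 ?invr_ge0 // bmax_gex0.
move=> i; rewrite ler_pdivlMl //. exact: (@bmax_ge _ (fun j => c * F j) 0 i).
Qed.

End P1.


Section P2.
Variable R : realType.

Lemma norm2_mul_crude p q (M : 'M[R]_(p, q)) (x : 'cV[R]_q) :
  norm2 (M *m x) <= Num.sqrt (\sum_i \sum_j M i j ^+ 2) * norm2 x.
Proof.
rewrite /norm2 -sqrtrM; last by apply: sumr_ge0 => i _; apply: sumr_ge0 => j _; exact: sqr_ge0.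
rewrite ler_sqrt; last by apply: mulr_ge0; [apply: sumr_ge0 => i _; apply: sumr_ge0 => j _; exact: sqr_ge0|exact: norm2sq_ge0].
rewrite /norm2sq mulr_suml; apply: ler_sum => i _.
rewrite mxE; exact: (CS (fun j => M i j) (fun j => x j 0)).
Qed.

Let S p q (M : 'M[R]_(p, q)) :=
  [set norm2 (M *m x) | x in [set x : 'cV[R]_q | norm2 x <= 1]].

Lemma opnS p q (M : 'M[R]_(p, q)) : opnorm2 M = sup (S M).
Proof. by []. Qed.

Lemma S_ne p q (M : 'M[R]_(p, q)) : S M !=set0.
Proof. exists (norm2 (M *m 0)), 0 => //=; by rewrite norm2_0 ler01. Qed.

Lemma S_ub p q (M : 'M[R]_(p, q)) : has_ubound (S M).
Proof.
exists (Num.sqrt (\sum_i \sum_j M i j ^+ 2)) => y [x /= hx <-].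
apply: le_trans (norm2_mul_crude M x) _.
by rewrite ler_piMr // sqrtr_ge0.
Qed.

Lemma opn_ub p q (M : 'M[R]_(p, q)) x : norm2 x <= 1 -> norm2 (M *m x) <= opnorm2 M.
Proof. move=> hx; rewrite opnS; apply: ub_le_sup (S_ub M) _ _; by exists x. Qed.

Lemma opn_ge0 p q (M : 'M[R]_(p, q)) : 0 <= opnorm2 M.
Proof. have := opn_ub M (x := 0); rewrite mulmx0. by rewrite !norm2_0; apply; exact: ler01. Qed.

Lemma opn_bound p q (M : 'M[R]_(p, q)) x : norm2 (M *m x) <= opnorm2 M * norm2 x.
Proof.
have [h0|hn] := eqVneq (norm2 x) 0.
  by rewrite h0 mulr0 (norm2_eq0 h0) mulmx0 norm2_0.
have hp : 0 < norm2 x by rewrite lt_def hn norm2_ge0.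
have := opn_ub M (x := (norm2 x)^-1 *: x).
rewrite norm2Z -scalemxAr norm2Z ger0_norm ?invr_ge0 ?norm2_ge0 // mulVf //.
by move/(_ (lexx _)); rewrite ler_pdivrMl // mulrC.
Qed.

Lemma opn_le p q (M : 'M[R]_(p, q)) c : 0 <= c ->
  (forall x, norm2 (M *m x) <= c * norm2 x) -> opnorm2 M <= c.
Proof.
move=> c0 h; rewrite opnS; apply: ge_sup (S_ne M) _ => y [x /= hx <-].
apply: le_trans (h x) _; by rewrite ler_piMr.
Qed.

Lemma opn_mul p q r (M : 'M[R]_(p, q)) (N : 'M[R]_(q, r)) :
  opnorm2 (M *m N) <= opnorm2 M * opnorm2 N.
Proof.
apply: opn_le; first by rewrite mulr_ge0 ?opn_ge0.
move=> x; rewrite -mulmxA; apply: le_trans (opn_bound _ _) _.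
by rewrite -mulrA ler_wpM2l ?opn_ge0 ?opn_bound.
Qed.

End P2.


Section Block.
Variable R : realType.

Lemma block_bound (b : nat -> R) k0 (g M : R) :
  (forall n, 0 <= b n) -> b 0%N <= 1 ->
  (forall k n, b (k + n)%N <= b n * b k) ->
  (0 < k0)%N -> 0 < g -> b k0 <= g ^+ k0 -> g <= M -> b 1%N <= M ->
  forall n, b n <= g ^+ n * (M / g) ^+ k0.
Proof.
move=> b0 b01 bsub k0p gp bk0 gM b1M n.
have M0 : 0 < M by apply: lt_le_trans gM.
have hq : forall q, b (q * k0)%N <= g ^+ (q * k0).
  elim=> [|q IH]; first by rewrite mul0n expr0.
  rewrite mulSn; apply: le_trans (bsub _ _) _.
  rewrite exprD mulrC; apply: ler_pM; rewrite ?b0 //.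
have hr : forall r, b r <= M ^+ r.
  elim=> [|r IH]; first by rewrite expr0.
  rewrite -addn1 addnC; apply: le_trans (bsub _ _) _.
  rewrite add1n exprSr; apply: ler_pM; rewrite ?b0 //.
rewrite (divn_eq n k0) addnC.
set q := (n %/ k0)%N; set r := (n %% k0)%N.
apply: le_trans (bsub _ _) _.
have -> : g ^+ (r + q * k0) * (M / g) ^+ k0 = g ^+ (q * k0) * (M ^+ r * (M / g) ^+ (k0 - r)).
  have hrk : (r <= k0)%N by rewrite ltnW // ltn_pmod.
  have e : (M / g) ^+ k0 = (M / g) ^+ r * (M / g) ^+ (k0 - r) by rewrite -exprD subnKC.
  have e2 : M ^+ r = g ^+ r * (M / g) ^+ r by rewrite -exprMn mulrCA divff ?mulr1 // gt_eqF.
  rewrite e e2 exprD; ring.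
apply: ler_pM; rewrite ?b0 //.
rewrite -[X in X <= _]mulr1; apply: ler_pM; rewrite ?b0 ?ler01 ?hr //.
by apply: exprn_ege1; rewrite ler_pdivlMr // mul1r.
Qed.

End Block.

Section Prods.
Variables (R : realType) (nS nA m : nat) (P : 'M[R]_(nA.+1 * nS, nS)) (gamma : R)
  (Phi : 'M[R]_(nA.+1 * nS, m)) (d : 'I_(nA.+1 * nS) -> R) (alpha : R).

Definition Api (pi : detpol nS nA) := Amu P gamma Phi d alpha (det_to_stoch R pi).
Definition pA l f := @prodA R nS nA m P gamma Phi d alpha l f.

Definition ftl l (f : {ffun 'I_l.+1 -> detpol nS nA}) : {ffun 'I_l -> detpol nS nA} :=
  [ffun i => f (lift ord0 i)].
Definition fcons l (pi : detpol nS nA) (h : {ffun 'I_l -> detpol nS nA}) :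
  {ffun 'I_l.+1 -> detpol nS nA} :=
  [ffun i => if unlift ord0 i is Some j then h j else pi].

Lemma peel l (f : {ffun 'I_l.+1 -> detpol nS nA}) :
  pA f = pA (ftl f) *m Api (f ord0).
Proof.
rewrite /pA /prodA big_ord_recr /= mulmxE; congr (_ * _).
  apply: eq_bigr => i _; rewrite /ftl ffunE; congr (Amu _ _ _ _ _ (det_to_stoch R (f _))).
  by apply: val_inj; rewrite /= /bump /= add1n subSS subnSK.
by congr (Amu _ _ _ _ _ (det_to_stoch R (f _))); apply: val_inj; rewrite /= subnn.
Qed.

Lemma ftl_cons l pi (h : {ffun 'I_l -> detpol nS nA}) : ftl (fcons pi h) = h.
Proof. by apply/ffunP => i; rewrite !ffunE liftK. Qed.

Lemma fcons0 l pi (h : {ffun 'I_l -> detpol nS nA}) : fcons pi h ord0 = pi.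
Proof. by rewrite ffunE unlift_none. Qed.

Lemma cons_prod l pi (h : {ffun 'I_l -> detpol nS nA}) :
  pA h *m Api pi = pA (fcons pi h).
Proof. by rewrite peel ftl_cons fcons0. Qed.

Lemma pA0 (f : {ffun 'I_0 -> detpol nS nA}) : pA f = 1%:M.
Proof. by rewrite /pA /prodA big_ord0. Qed.

Lemma split_prod k n (f : {ffun 'I_(k + n) -> detpol nS nA}) :
  exists (g : {ffun 'I_n -> detpol nS nA}) (h : {ffun 'I_k -> detpol nS nA}), pA f = pA g *m pA h.
Proof.
elim: k f => [|k IH] f.
  exists f, [ffun => [ffun => ord0]]; by rewrite pA0 mulmx1.
have [g [h e]] := IH (ftl (f : {ffun 'I_(k + n).+1 -> detpol nS nA})).
exists g, (fcons (f ord0) h).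
rewrite -cons_prod mulmxA -e.
exact: (peel (f : {ffun 'I_(k + n).+1 -> detpol nS nA})).
Qed.

Definition bb l := \big[Num.max/0]_(f : {ffun 'I_l -> detpol nS nA}) opnorm2 (pA f).

Lemma bb_ge0 l : 0 <= bb l.
Proof. exact: bmax_gex0. Qed.

Lemma bb_ge l (f : {ffun 'I_l -> detpol nS nA}) : opnorm2 (pA f) <= bb l.
Proof. exact: (@bmax_ge _ _ (fun f => opnorm2 (pA f))). Qed.

Lemma bb_bound l (f : {ffun 'I_l -> detpol nS nA}) x : norm2 (pA f *m x) <= bb l * norm2 x.
Proof.
apply: le_trans (opn_bound _ _) _; apply: ler_wpM2r; [exact: norm2_ge0|exact: bb_ge].
Qed.

Lemma bb_sub k n : bb (k + n) <= bb n * bb k.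
Proof.
apply: bmax_le; first by rewrite mulr_ge0 ?bb_ge0.
move=> f; have [g [h ->]] := split_prod f.
apply: le_trans (opn_mul _ _) _; apply: ler_pM; rewrite ?opn_ge0 ?bb_ge //.
Qed.

Lemma bb0 : bb 0 <= 1.
Proof.
apply: bmax_le; first exact: ler01.
move=> f; rewrite pA0; apply: opn_le; first exact: ler01.
by move=> x; rewrite mul1mx mul1r.
Qed.

End Prods.


Section Fek.
Variable R : realType.

Lemma geo_small (z e : R) : 0 <= z -> z < 1 -> 0 < e ->
  exists N, forall n, (N <= n)%N -> z ^+ n <= e.
Proof.
move=> z0 z1 e0.
have hz : `|z| < 1 by rewrite ger0_norm.
have := cvg_geometric 1 hz; move/cvgrPdist_lt => /(_ e e0) [N _ hN].
exists N => n hn; have := hN n hn; rewrite /= /geometric mul1r sub0r normrN.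
by rewrite ger0_norm ?exprn_ge0 // => /ltW.
Qed.

Lemma powR_root (x : R) n : 0 <= x -> (0 < n)%N -> (x ^+ n) `^ (n%:R)^-1 = x.
Proof.
move=> x0 n0; rewrite -powR_mulrn // -powRrM mulfV ?powRr1 //.
by rewrite pnatr_eq0 -lt0n.
Qed.

Lemma powR_pow (y : R) n : 0 <= y -> (0 < n)%N -> (y `^ (n%:R)^-1) ^+ n = y.
Proof.
move=> y0 n0; rewrite -powR_mulrn ?powR_ge0 // -powRrM mulVf ?powRr1 //.
by rewrite pnatr_eq0 -lt0n.
Qed.

Variable b : nat -> R.
Hypotheses (b0 : forall n, 0 <= b n) (b01 : b 0%N <= 1)
  (bsub : forall k n, b (k + n)%N <= b n * b k).

Let a n := b n `^ (n%:R)^-1.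
Let Sa := [set a n | n in [set n | (0 < n)%N]].

Lemma Sa_ne : Sa !=set0.
Proof. by exists (a 1%N), 1%N. Qed.

Lemma Sa_lb : has_lbound Sa.
Proof. by exists 0 => y [n _ <-]; exact: powR_ge0. Qed.

Lemma L_ge0 : 0 <= inf Sa.
Proof. by apply: lb_le_inf Sa_ne _ => y [n _ <-]; exact: powR_ge0. Qed.

Lemma fekete : a n @[n --> \oo] --> inf Sa.
Proof.
apply/cvgrPdist_le => dl dl0.
set L := inf Sa.
have L0 := L_ge0.
have [y [k0 /= k0p <-] hk0] := inf_lt Sa_ne (x := L + dl / 2) ltac:(rewrite ltrDl; lra).
set g := L + dl / 2.
have gp : 0 < g by rewrite /g; lra.
have bk0 : b k0 <= g ^+ k0.
  rewrite -(powR_pow (b0 k0) k0p); rewrite lerXn2r ?nnegrE ?powR_ge0 ?ltW //.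
set M := Num.max g (b 1%N).
have gM : g <= M by rewrite le_max lexx.
have b1M : b 1%N <= M by rewrite le_max lexx orbT.
have hb := block_bound b0 b01 bsub k0p gp bk0 gM b1M.
set K := (M / g) ^+ k0 in hb.
have Kp : 0 < K by rewrite exprn_gt0 // divr_gt0 // (lt_le_trans gp gM).
set z := g / (L + dl).
have Ldp : 0 < L + dl by lra.
have z0 : 0 <= z by rewrite divr_ge0 ?ltW.
have z1 : z < 1 by rewrite ltr_pdivrMr // mul1r /g; lra.
have Kip : 0 < K^-1 by rewrite invr_gt0.
have [N hN] := geo_small z0 z1 Kip.
exists (maxn N 1)%N => // n /= hn.
have hn1 : (0 < n)%N by apply: leq_trans hn; rewrite leq_maxr.
have hnN : (N <= n)%N by apply: leq_trans hn; rewrite leq_maxl.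
have aL : L <= a n by apply: (ge_inf Sa_lb); exists n.
have bn : b n <= (L + dl) ^+ n.
  have hzK : z ^+ n * K <= 1 by rewrite -ler_pdivlMr // mul1r; apply: hN.
  apply: le_trans (hb n) _.
  have -> : g = z * (L + dl) by rewrite /z mulfVK // gt_eqF.
  rewrite exprMn (mulrC (z ^+ n)) -mulrA -[X in _ <= X]mulr1.
  by apply: ler_wpM2l hzK; exact: exprn_ge0 (ltW Ldp).
have anl : a n <= L + dl.
  rewrite /a -[X in _ <= X](powR_root (ltW Ldp) hn1).
  by apply: ge0_ler_powR => //; rewrite ?nnegrE ?invr_ge0 ?ler0n ?exprn_ge0 ?b0 ?ltW.
rewrite ler0_norm; [lra|lra].
Qed.

Lemma fekete_lim : limn a = inf Sa.
Proof. exact: (cvg_lim (@Rhausdorff R) fekete). Qed.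

Lemma jsr_ge0 : 0 <= limn a.
Proof. rewrite fekete_lim; exact: L_ge0. Qed.

Lemma jsr_geo (beta : R) : 0 < beta -> limn a < beta ->
  exists rho K, [/\ 0 < rho, rho < 1, 0 < K & forall n, b n <= K * (rho * beta) ^+ n].
Proof.
move=> bp; rewrite fekete_lim => hL.
have [y [k0 /= k0p <-] hk0] := inf_lt Sa_ne hL.
set g := Num.max (a k0) (beta / 2).
have gp : 0 < g by rewrite lt_max divr_gt0 ?orbT.
have gb : g < beta by rewrite gt_max hk0 /=; lra.
have bk0 : b k0 <= g ^+ k0.
  rewrite -(powR_pow (b0 k0) k0p) ler_pXn2r ?nnegrE ?powR_ge0 //; last exact: ltW.
  by rewrite /g le_max lexx.
set M := Num.max g (b 1%N).
have gM : g <= M by rewrite le_max lexx.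
have b1M : b 1%N <= M by rewrite le_max lexx orbT.
have hb := block_bound b0 b01 bsub k0p gp bk0 gM b1M.
exists (g / beta), ((M / g) ^+ k0); split.
- by rewrite divr_gt0.
- by rewrite ltr_pdivrMr // mul1r.
- by rewrite exprn_gt0 // divr_gt0 // (lt_le_trans gp gM).
move=> n; rewrite divfK ?gt_eqF // mulrC; exact: hb.
Qed.

End Fek.


Section VV.
Variables (R : realType) (nS nA m : nat) (P : 'M[R]_(nA.+1 * nS, nS)) (gamma : R)
  (Phi : 'M[R]_(nA.+1 * nS, m)) (d : 'I_(nA.+1 * nS) -> R) (alpha : R) (beta : R).
Hypothesis bp : 0 < beta.

Local Notation pA := (pA P gamma Phi d alpha).
Local Notation bb := (bb P gamma Phi d alpha).

Definition Q l (x : 'cV[R]_m) :=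
  \big[Num.max/0]_(f : {ffun 'I_l -> detpol nS nA}) norm2sq (pA f *m x).
Definition VT t x := Vt P gamma Phi d alpha beta t x.
Definition VI x := Vinf P gamma Phi d alpha beta x.

Lemma VTE t x : VT t x = \sum_(l < t.+1) beta ^- (2 * l) * Q l x.
Proof. by []. Qed.

Lemma Q_ge0 l x : 0 <= Q l x.
Proof. exact: bmax_gex0. Qed.

Lemma Q_ge l (f : {ffun 'I_l -> detpol nS nA}) x : norm2sq (pA f *m x) <= Q l x.
Proof. exact: (@bmax_ge _ _ (fun f => norm2sq (pA f *m x))). Qed.

Lemma Q0 x : Q 0 x = norm2sq x.
Proof.
apply/eqP; rewrite eq_le; apply/andP; split.
  apply: bmax_le; first exact: norm2sq_ge0.
  by move=> f /=; rewrite pA0 mul1mx.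
by have := @Q_ge 0 [ffun => [ffun => ord0]] x; rewrite pA0 mul1mx.
Qed.

Lemma w_gt0 l : 0 < beta ^- (2 * l).
Proof. by rewrite invr_gt0 exprn_gt0. Qed.

Lemma VT_ge0 t x : 0 <= VT t x.
Proof. by apply: sumr_ge0 => l _; rewrite mulr_ge0 ?Q_ge0 // ltW // w_gt0. Qed.

Lemma VT_mono x : {homo VT ^~ x : n k / (n <= k)%N >-> n <= k}.
Proof.
apply/nondecreasing_seqP => t; rewrite !VTE [X in _ <= X]big_ord_recr /= lerDl.
by rewrite mulr_ge0 ?Q_ge0 // ltW // w_gt0.
Qed.

Lemma VT0 x : VT 0 x = norm2sq x.
Proof. by rewrite VTE big_ord1 /= muln0 expr0 invr1 mul1r Q0. Qed.

Lemma Q_bound l x : Q l x <= (bb l) ^+ 2 * norm2sq x.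
Proof.
apply: bmax_le; first by rewrite mulr_ge0 ?sqr_ge0 ?norm2sq_ge0.
move=> f; rewrite -!norm2_sq -exprMn; apply: lerXn2r; rewrite ?nnegrE ?norm2_ge0 ?mulr_ge0 ?bb_ge0 //.
  exact: norm2_ge0.
exact: bb_bound.
Qed.

Lemma geo_sum (z : R) n : 0 <= z -> z < 1 -> \sum_(l < n) z ^+ l <= (1 - z)^-1.
Proof.
move=> z0 z1; elim: n => [|n IH]; first by rewrite big_ord0 invr_ge0 subr_ge0 ltW.
rewrite big_ord_recl expr0 /=.
under eq_bigr do rewrite /bump /= add1n exprS.
rewrite -mulr_sumr.
have h : 1 + z * (1 - z)^-1 = (1 - z)^-1.
  by field; rewrite subr_eq0 eq_sym lt_eqF.
by rewrite -[X in _ <= X]h lerD2l; apply: ler_wpM2l.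
Qed.

Variables (rho K : R).
Hypotheses (rho0 : 0 < rho) (rho1 : rho < 1) (K0 : 0 < K)
  (hbb : forall n, bb n <= K * (rho * beta) ^+ n).

Definition CC := 1 + K ^+ 2 / (1 - rho ^+ 2).

Lemma CC_ge1 : 1 <= CC.
Proof.
rewrite /CC lerDl divr_ge0 ?sqr_ge0 // subr_ge0 expr_le1 ?ltW //.
Qed.

Lemma VT_bound t x : VT t x <= CC * norm2sq x.
Proof.
have n0 := norm2sq_ge0 x.
apply: (@le_trans _ _ (\sum_(l < t.+1) K ^+ 2 * norm2sq x * (rho ^+ 2) ^+ l)).
  rewrite VTE; apply: ler_sum => l _.
  rewrite mulrC ler_pdivrMr ?exprn_gt0 //.
  apply: le_trans (Q_bound l x) _.
  have hb : bb l ^+ 2 <= (K * (rho * beta) ^+ l) ^+ 2.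
    apply: lerXn2r; rewrite ?nnegrE ?bb_ge0 ?hbb //.
    by apply: mulr_ge0; [exact: ltW | exact: exprn_ge0 (mulr_ge0 (ltW rho0) (ltW bp))].
  apply: le_trans (ler_wpM2r n0 hb) _.
  rewrite le_eqVlt; apply/orP; left; apply/eqP.
  rewrite (exprAC rho 2 l) exprM (exprAC beta 2 l) !exprMn; ring.
rewrite -mulr_sumr /CC mulrDl mul1r.
have hs : \sum_(l < t.+1) (rho ^+ 2) ^+ l <= (1 - rho ^+ 2)^-1.
  by apply: geo_sum; [exact: sqr_ge0 | rewrite expr_lt1 ?ltW].
have h := ler_wpM2l (mulr_ge0 (sqr_ge0 K) n0) hs.
apply: le_trans h _.
by rewrite mulrAC lerDr.
Qed.

Lemma VT_cvg x : cvgn (VT ^~ x).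
Proof.
apply: nondecreasing_is_cvgn; first exact: VT_mono.
by exists (CC * norm2sq x) => y [t _ <-]; exact: VT_bound.
Qed.


Lemma VT_le_VI t x : VT t x <= VI x.
Proof. have := nondecreasing_cvgn_le (VT_mono x) (@VT_cvg x) t. by []. Qed.

Lemma VI_le x c : (forall t, VT t x <= c) -> VI x <= c.
Proof. move=> h; apply: limr_le; first exact: VT_cvg. by exists 0%N. Qed.

Lemma VI_ge x : norm2sq x <= VI x.
Proof. by rewrite -VT0; exact: VT_le_VI. Qed.

Lemma VI_ge0 x : 0 <= VI x.
Proof. exact: le_trans (norm2sq_ge0 x) (VI_ge x). Qed.

Lemma VI_bound x : VI x <= CC * norm2sq x.
Proof. apply: VI_le => t; exact: VT_bound. Qed.


Lemma Q_scale c l x : Q l (c *: x) = c ^+ 2 * Q l x.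
Proof.
rewrite /Q -bmax_scale ?sqr_ge0 //; apply: eq_bigr => f _.
by rewrite -scalemxAr norm2sqZ.
Qed.

Lemma VT_scale c t x : VT t (c *: x) = c ^+ 2 * VT t x.
Proof.
rewrite !VTE mulr_sumr; apply: eq_bigr => l _; rewrite Q_scale mulrCA //.
Qed.

Lemma VI_scale_le c x : VI (c *: x) <= c ^+ 2 * VI x.
Proof.
apply: VI_le => t; rewrite VT_scale; apply: ler_wpM2l; [exact: sqr_ge0|exact: VT_le_VI].
Qed.

Lemma VI_scale c x : VI (c *: x) = c ^+ 2 * VI x.
Proof.
apply/eqP; rewrite eq_le VI_scale_le /=.
have [->|cn] := eqVneq c 0.
  by rewrite expr0n /= mul0r VI_ge0.
have c2 : 0 < c ^+ 2 by rewrite lt_def sqr_ge0 andbT sqrf_eq0 cn.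
have := VI_scale_le c^-1 (c *: x); rewrite scalerA mulVf // scale1r exprVn => h.
by rewrite -ler_pdivlMl.
Qed.

Lemma sqrtQ_tri l x y : Num.sqrt (Q l (x + y)) <= Num.sqrt (Q l x) + Num.sqrt (Q l y).
Proof.
rewrite -(ger0_norm (addr_ge0 (sqrtr_ge0 _) (sqrtr_ge0 _))) -sqrtr_sqr ler_sqrt ?sqr_ge0 //.
apply: bmax_le; first exact: sqr_ge0.
move=> f /=; rewrite mulmxDr -norm2_sq.
have h1 : norm2 (pA f *m x) <= Num.sqrt (Q l x) by rewrite ler_sqrt ?Q_ge0 ?Q_ge.
have h2 : norm2 (pA f *m y) <= Num.sqrt (Q l y) by rewrite ler_sqrt ?Q_ge0 ?Q_ge.
apply: lerXn2r; rewrite ?nnegrE ?norm2_ge0 ?addr_ge0 ?sqrtr_ge0 //.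
apply: le_trans (norm2D _ _) _; exact: lerD.
Qed.

Lemma VT_sq t x : VT t x = \sum_(l < t.+1) (Num.sqrt (beta ^- (2 * l) * Q l x)) ^+ 2.
Proof.
rewrite VTE; apply: eq_bigr => l _; rewrite sqr_sqrtr // mulr_ge0 ?Q_ge0 //; exact: ltW (w_gt0 _).
Qed.

Lemma VT_tri t x y : Num.sqrt (VT t (x + y)) <= Num.sqrt (VT t x) + Num.sqrt (VT t y).
Proof.
rewrite !VT_sq; apply: sqrt_mink => l; first exact: sqrtr_ge0.
have w0 : 0 <= beta ^- (2 * l) by rewrite ltW // w_gt0.
rewrite !sqrtrM // -mulrDr; apply: ler_wpM2l; [exact: sqrtr_ge0|exact: sqrtQ_tri].
Qed.

Lemma VI_tri x y : Num.sqrt (VI (x + y)) <= Num.sqrt (VI x) + Num.sqrt (VI y).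
Proof.
rewrite -(ger0_norm (addr_ge0 (sqrtr_ge0 _) (sqrtr_ge0 _))) -sqrtr_sqr ler_sqrt ?sqr_ge0 //.
apply: VI_le => t; rewrite -[VT t (x + y)]sqr_sqrtr ?VT_ge0 //.
apply: lerXn2r; rewrite ?nnegrE ?sqrtr_ge0 ?addr_ge0 //.
apply: le_trans (VT_tri t x y) _; apply: lerD; rewrite ler_sqrt ?VI_ge0 // VT_le_VI //.
Qed.

Lemma VI_eq0 x : VI x = 0 -> x = 0.
Proof.
move=> h; apply: norm2sq_eq0; apply/eqP; rewrite eq_le norm2sq_ge0 andbT -h; exact: VI_ge.
Qed.

Lemma w_shift l : beta ^- (2 * l) = beta ^+ 2 * beta ^- (2 * l.+1).
Proof.
by rewrite mulnS exprD invfM mulrA mulfV ?mul1r // expf_neq0 // gt_eqF.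
Qed.

Lemma VI_shift (M : 'M[R]_m) : (forall l y, Q l (M *m y) <= Q l.+1 y) ->
  forall x, VI (M *m x) <= beta ^+ 2 * (VI x - norm2sq x).
Proof.
move=> hM x; apply: VI_le => t.
apply: (@le_trans _ _ (beta ^+ 2 * (VT t.+1 x - norm2sq x))); last first.
  by apply: ler_wpM2l; [exact: sqr_ge0| rewrite lerD2r VT_le_VI].
rewrite VTE [VT t.+1 x]VTE (big_ord_recl t.+1) /= muln0 expr0 invr1 mul1r Q0 (addrC (norm2sq x)) addrK.
rewrite mulr_sumr; apply: ler_sum => l _.
rewrite w_shift -mulrA; apply: ler_wpM2l; first exact: sqr_ge0.
rewrite /bump /= add1n; apply: ler_wpM2l; [exact: ltW (w_gt0 _)|exact: hM].
Qed.

End VV.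


Section Helpers.
Variable R : realType.

Lemma sum_ind_mul n (a0 : 'I_n) (g : 'I_n -> R) : \sum_a (a == a0)%:R * g a = g a0.
Proof.
rewrite (bigD1 a0) //= eqxx mul1r big1 ?addr0 // => a /negbTE ->; by rewrite mul0r.
Qed.

Lemma sum_ind n (a0 : 'I_n) : \sum_a (a == a0)%:R = 1 :> R.
Proof. by rewrite -[RHS](sum_ind_mul a0 (fun => 1)); apply: eq_bigr => a _; rewrite mulr1. Qed.

Lemma jensen1 (I : finType) (lam u : I -> R) : (forall i, 0 <= lam i) -> \sum_i lam i = 1 ->
  (\sum_i lam i * u i) ^+ 2 <= \sum_i lam i * u i ^+ 2.
Proof.
move=> l0 l1; set M := \sum_i lam i * u i.
have : 0 <= \sum_i lam i * (u i - M) ^+ 2 by apply: sumr_ge0 => i _; rewrite mulr_ge0 ?sqr_ge0.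
have -> : \sum_i lam i * (u i - M) ^+ 2 =
   1 * \sum_i lam i * u i ^+ 2 + (- 2 * M) * \sum_i lam i * u i + M ^+ 2 * \sum_i lam i.
  by rewrite -sumB3; apply: eq_bigr => i _; ring.
rewrite l1 -/M; lra.
Qed.

Lemma jensen (I : finType) n (lam : I -> R) (z : I -> 'cV[R]_n) :
  (forall i, 0 <= lam i) -> \sum_i lam i = 1 ->
  norm2sq (\sum_i lam i *: z i) <= \sum_i lam i * norm2sq (z i).
Proof.
move=> l0 l1; rewrite /norm2sq.
under [X in _ <= X]eq_bigr do rewrite mulr_sumr.
rewrite exchange_big /=; apply: ler_sum => k _.
rewrite summxE (eq_bigr (fun i => lam i * z i k 0)); last by move=> i _; rewrite mxE.
exact: jensen1.
Qed.

Lemma lin_id n (th th' a b b' c c' : 'cV[R]_n) (al ga : R) :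
  (th + al *: (a + ga *: b - c)) - (th' + al *: (a + ga *: b' - c')) =
  (th - th') - al *: (c - c') + (al * ga) *: (b - b').
Proof. apply/matrixP => i j; rewrite !mxE; ring. Qed.

End Helpers.

Section Stoch.
Variables (R : realType) (nS nA m : nat) (P : 'M[R]_(nA.+1 * nS, nS)) (gamma : R)
  (Phi : 'M[R]_(nA.+1 * nS, m)) (d : 'I_(nA.+1 * nS) -> R) (alpha : R).

Local Notation pA := (pA P gamma Phi d alpha).
Local Notation Api := (Api P gamma Phi d alpha).

Definition lam (mu : 'I_nS -> 'I_nA.+1 -> R) (pi : detpol nS nA) := \prod_s mu s (pi s).

Variable mu : 'I_nS -> 'I_nA.+1 -> R.
Hypothesis hmu : is_stoch_policy mu.

Lemma lam_ge0 pi : 0 <= lam mu pi.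
Proof. apply: prodr_ge0 => s _; exact: hmu.1. Qed.

Lemma lam_sum : \sum_(pi : detpol nS nA) lam mu pi = 1.
Proof.
rewrite /lam -(bigA_distr_bigA (fun s a => mu s a)) /=.
by rewrite big1 // => s _; exact: hmu.2.
Qed.

Lemma marg s0 (G : 'I_nA.+1 -> R) :
  \sum_(pi : detpol nS nA) lam mu pi * G (pi s0) = \sum_a mu s0 a * G a.
Proof.
pose F s a := if s == s0 then mu s a * G a else mu s a.
transitivity (\sum_(pi : detpol nS nA) \prod_s F s (pi s)).
  apply: eq_bigr => pi _; rewrite /lam (bigD1 s0) //= [RHS](bigD1 s0) //= /F eqxx.
  have e : \prod_(s | s != s0) F s (pi s) = \prod_(s | s != s0) mu s (pi s).
    by apply: eq_bigr => s /negbTE h; rewrite /F h.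
  rewrite e; ring.
rewrite -(bigA_distr_bigA F) /= (bigD1 s0) //=.
have e : \prod_(s | s != s0) \sum_a F s a = 1.
  by apply: big1 => s /negbTE h; rewrite /F h; exact: hmu.2.
by rewrite e mulr1 /F eqxx.
Qed.


Lemma PiMat_comb : PiMat mu = \sum_(pi : detpol nS nA) lam mu pi *: PiMat (det_to_stoch R pi).
Proof.
apply/matrixP => s k; rewrite summxE mxE.
pose G a' := \sum_(a < nA.+1) (if k == sa_idx s a then (a == a')%:R else 0 : R).
rewrite (eq_bigr (fun pi => lam mu pi * G (pi s))); last by move=> pi _; rewrite !mxE.
rewrite marg /G.
under [RHS]eq_bigr do rewrite mulr_sumr.
rewrite exchange_big /=; apply: eq_bigr => a _.
case: ifP => _; last by rewrite big1 // => a' _; rewrite mulr0.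
rewrite (eq_bigr (fun a' => (a' == a)%:R * mu s a')); first by rewrite sum_ind_mul.
by move=> a' _; rewrite eq_sym mulrC.
Qed.

Lemma Amu_comb : Amu P gamma Phi d alpha mu = \sum_(pi : detpol nS nA) lam mu pi *: Api pi.
Proof.
rewrite /Api /Amu.
under [RHS]eq_bigr do rewrite scalerDr.
rewrite big_split /= -scaler_suml lam_sum scale1r; congr (_ + _).
rewrite PiMat_comb mulmx_sumr mulmx_suml scaler_sumr; apply: eq_bigr => pi _.
by rewrite -scalemxAr -scalemxAl !scalerA mulrC.
Qed.

Lemma Q_stoch l y : Q P gamma Phi d alpha l (Amu P gamma Phi d alpha mu *m y)
   <= Q P gamma Phi d alpha l.+1 y.
Proof.
apply: bmax_le; first exact: Q_ge0.
move=> f /=; rewrite Amu_comb mulmx_suml mulmx_sumr.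
rewrite (eq_bigr (fun pi => lam mu pi *: (pA (fcons pi f) *m y))); last first.
  by move=> pi _; rewrite -scalemxAl -scalemxAr mulmxA cons_prod.
apply: le_trans (jensen _ (@lam_ge0) lam_sum) _.
apply: le_trans (_ : _ <= \sum_(pi : detpol nS nA) lam mu pi * Q P gamma Phi d alpha l.+1 y) _.
  apply: ler_sum => pi _; apply: ler_wpM2l; [exact: lam_ge0|exact: Q_ge].
by rewrite -mulr_suml lam_sum mul1r.
Qed.

End Stoch.


Section Tdiff.
Variables (R : realType) (nS nA m : nat) (P : 'M[R]_(nA.+1 * nS, nS))
  (r : 'I_(nA.+1 * nS) -> 'I_nS -> R) (gamma : R)
  (Phi : 'M[R]_(nA.+1 * nS, m)) (d : 'I_(nA.+1 * nS) -> R) (alpha : R).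

Lemma PiMat_mul (mu : 'I_nS -> 'I_nA.+1 -> R) (y : 'cV[R]_(nA.+1 * nS)) s :
  (PiMat mu *m y) s 0 = \sum_a mu s a * y (sa_idx s a) 0.
Proof.
rewrite mxE.
under eq_bigr do rewrite mxE mulr_suml.
rewrite exchange_big /=; apply: eq_bigr => a _.
rewrite (bigD1 (sa_idx s a)) //= eqxx big1 ?addr0 // => k /negbTE ->; by rewrite mul0r.
Qed.

Lemma argmax_ex (u : 'cV[R]_(nA.+1 * nS)) :
  exists a1 : 'I_nS -> 'I_nA.+1, forall s,
    \big[Num.max/u (sa_idx s ord0) 0]_(a < nA.+1) u (sa_idx s a) 0 = u (sa_idx s (a1 s)) 0.
Proof.
have ex s : exists a, \big[Num.max/u (sa_idx s ord0) 0]_(a < nA.+1) u (sa_idx s a) 0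
    == u (sa_idx s a) 0.
  by have [a ha] := bmax_ex (fun a => u (sa_idx s a) 0) ord0; exists a; apply/eqP.
by exists (fun s => xchoose (ex s)) => s; apply/eqP; exact: (xchooseP (ex s)).
Qed.

Lemma Vdiff (th th' : 'cV[R]_m) : exists mu, is_stoch_policy mu /\
  Vtheta Phi th - Vtheta Phi th' = PiMat mu *m (Phi *m (th - th')).
Proof.
set u := Phi *m th; set v := Phi *m th'.
have [a1 h1] := argmax_ex u.
have [a2 h2] := argmax_ex v.
pose w s a := u (sa_idx s a) 0 - v (sa_idx s a) 0.
pose D s := Vtheta Phi th s 0 - Vtheta Phi th' s 0.
have eV z s : Vtheta Phi z s 0 =
    \big[Num.max/(Phi *m z) (sa_idx s ord0) 0]_(a < nA.+1) (Phi *m z) (sa_idx s a) 0.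
  by rewrite /Vtheta [LHS]mxE.
have hu s a : u (sa_idx s a) 0 <= u (sa_idx s (a1 s)) 0.
  by rewrite -h1; exact: (bmax_ge (fun a => u (sa_idx s a) 0)).
have hv s a : v (sa_idx s a) 0 <= v (sa_idx s (a2 s)) 0.
  by rewrite -h2; exact: (bmax_ge (fun a => v (sa_idx s a) 0)).
have hD s : w s (a2 s) <= D s /\ D s <= w s (a1 s).
  rewrite /D !eV -/u -/v h1 h2 /w; split.
    by rewrite lerD2r.
  by rewrite lerD2l lerN2.
pose t s := if w s (a1 s) == w s (a2 s) then 1 else (D s - w s (a2 s)) / (w s (a1 s) - w s (a2 s)).
have ht s : 0 <= t s <= 1 /\ t s * w s (a1 s) + (1 - t s) * w s (a2 s) = D s.
  have [hl hr] := hD s.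
  rewrite /t; case: eqP => e.
    split; first by rewrite ler01 lexx.
    by rewrite mul1r subrr mul0r addr0; apply/eqP; rewrite eq_le hr andbT e hl.
  have hp : 0 < w s (a1 s) - w s (a2 s).
    by rewrite subr_gt0 lt_def; apply/andP; split; [apply/eqP => e'; apply: e | exact: le_trans hl hr].
  split.
    apply/andP; split; first by apply: divr_ge0; [rewrite subr_ge0 | exact: ltW].
    by rewrite ler_pdivrMr // mul1r lerD2r.
  by field; rewrite gt_eqF.
pose mu s a := t s * (a == a1 s)%:R + (1 - t s) * (a == a2 s)%:R.
exists mu; split.
  split.
    move=> s a; have [/andP [t0 t1] _] := ht s.
    by rewrite /mu; apply: addr_ge0; apply: mulr_ge0; rewrite ?ler0n ?subr_ge0.
  move=> s; rewrite /mu big_split /= -!mulr_sumr !sum_ind; ring.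
apply/matrixP => s j; rewrite (ord1 j) PiMat_mul.
transitivity (D s); first by rewrite /D !mxE.
rewrite mulmxBr.
have -> : \sum_a mu s a * (u - v) (sa_idx s a) 0 = \sum_a mu s a * w s a.
  by apply: eq_bigr => a _; congr (_ * _); rewrite /w !mxE.
rewrite /mu /=.
under eq_bigr do rewrite mulrDl -!mulrA.
rewrite big_split /= -!mulr_sumr.
rewrite (eq_bigr (fun a => (a == a1 s)%:R * w s a)); last by move=> a _; rewrite mulrC.
rewrite [X in _ = _ + _ * X](eq_bigr (fun a => (a == a2 s)%:R * w s a)); last by move=> a _; rewrite mulrC.
rewrite !sum_ind_mul; by have [_ ->] := ht s.
Qed.

Lemma Tdiff (th th' : 'cV[R]_m) : exists mu, is_stoch_policy mu /\
  Talpha P r gamma Phi d alpha th - Talpha P r gamma Phi d alpha th' =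
  Amu P gamma Phi d alpha mu *m (th - th').
Proof.
have [mu [hmu hV]] := Vdiff th th'.
exists mu; split => //.
set W := Phi^T *m Dmat d.
have eT z : Talpha P r gamma Phi d alpha z =
   z + alpha *: (W *m Rexp P r + gamma *: (W *m (P *m Vtheta Phi z)) - W *m (Phi *m z)).
  by rewrite /Talpha /gres -/W mulmxBr mulmxDr -scalemxAr.
rewrite !eT lin_id /Amu -/W mulmxDl mulmxBl mul1mx -!scalemxAl -!mulmxA -hV.
by rewrite !mulmxBr.
Qed.

End Tdiff.


Section FP.
Variables (R : realType) (m : nat) (T : 'cV[R]_m -> 'cV[R]_m) (p : 'cV[R]_m -> R) (beta Cs : R).
Hypotheses (b0 : 0 < beta) (b1 : beta < 1) (Cs0 : 0 <= Cs)
  (ptri : forall x y, p (x + y) <= p x + p y)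
  (pcontr : forall x y, p (T x - T y) <= beta * p (x - y))
  (plo : forall x, norm2 x <= p x) (phi : forall x, p x <= Cs * norm2 x).

Lemma p_ge0 x : 0 <= p x.
Proof. exact: le_trans (norm2_ge0 x) (plo x). Qed.

Lemma small0 (z : R) : 0 <= z -> (forall e, 0 < e -> z <= e) -> z = 0.
Proof.
move=> z0 h; apply/eqP; rewrite eq_le z0 andbT; apply/negPn/negP => hz.
rewrite -ltNge in hz; have := h (z / 2); rewrite divr_gt0 // => /(_ isT); lra.
Qed.

Let x k := iter k T 0.
Let E := p (x 1%N - x 0%N).

Lemma step k : p (x k.+1 - x k) <= beta ^+ k * E.
Proof.
elim: k => [|k IH]; first by rewrite expr0 mul1r.
rewrite /x !iterS -/(x k.+1) -/(x k); apply: le_trans (pcontr _ _) _.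
by rewrite exprS -mulrA ler_wpM2l // ltW.
Qed.

Lemma stepc k i : `|x k.+1 i 0 - x k i 0| <= beta ^+ k * E.
Proof.
have := coord_le_norm2 (x k.+1 - x k) i; rewrite !mxE => h.
exact: le_trans h (le_trans (plo _) (step k)).
Qed.

Let G k := beta ^+ k * E / (1 - beta).

Lemma G_ge0 k : 0 <= G k.
Proof. rewrite /G; apply: divr_ge0; [apply: mulr_ge0; [exact: exprn_ge0 (ltW b0) | exact: p_ge0] | by rewrite subr_ge0 ltW]. Qed.

Lemma G_step k : G k - G k.+1 = beta ^+ k * E.
Proof. rewrite /G exprS; field; by rewrite subr_eq0 eq_sym lt_eqF. Qed.

Section Coord.
Variable i : 'I_m.
Let dn k := x k i 0 - G k.
Let up k := x k i 0 + G k.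

Lemma dn_mono : {homo dn : a b / (a <= b)%N >-> a <= b}.
Proof.
apply/nondecreasing_seqP => k; rewrite /dn.
have := stepc k i; have := G_step k; rewrite ler_norml => e /andP [h1 h2]; lra.
Qed.

Lemma up_mono : {homo up : a b / (a <= b)%N >-> b <= a}.
Proof.
apply/nonincreasing_seqP => k; rewrite /up.
have := stepc k i; have := G_step k; rewrite ler_norml => e /andP [h1 h2]; lra.
Qed.

Lemma dn_up n k : dn n <= up k.
Proof.
case: (leqP n k) => h.
  apply: le_trans (dn_mono h) _; rewrite /dn /up; have := G_ge0 k; lra.
apply: le_trans (up_mono (ltnW h)); rewrite /dn /up; have := G_ge0 n; lra.
Qed.

Lemma dn_cvg : cvgn dn.
Proof.
apply: nondecreasing_is_cvgn; first exact: dn_mono.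
by exists (up 0%N) => y [n _ <-]; exact: dn_up.
Qed.

Lemma lim_close k : `|limn dn - x k i 0| <= G k.
Proof.
have h1 : dn k <= limn dn := nondecreasing_cvgn_le dn_mono dn_cvg k.
have h2 : limn dn <= up k.
  by apply: limr_le; [exact: dn_cvg | exists 0%N => // n _; exact: dn_up].
rewrite ler_norml; move: h1 h2; rewrite /dn /up; lra.
Qed.

End Coord.

Lemma fixed_exists : exists th, T th = th.
Proof.
pose th := \col_i limn (fun k => x k i 0 - G k).
exists th.
have hc k i : `|(th - x k) i 0| <= G k.
  by rewrite !mxE; exact: lim_close.
have hc' k i : `|(x k - th) i 0| <= G k.
  by rewrite !mxE distrC; exact: lim_close.
have nb (z : 'cV[R]_m) k : (forall i, `|z i 0| <= G k) -> norm2 z <= Num.sqrt m%:R * G k.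
  move=> hz; rewrite -[G k]ger0_norm ?G_ge0 // -sqrtr_sqr -sqrtrM ?ler0n //.
  rewrite /norm2 ler_sqrt; first exact: norm2sq_coord_le hz.
  by rewrite mulr_ge0 ?ler0n ?sqr_ge0.
have Gdec j : G j.+1 <= G j.
  have := G_step j; have : 0 <= beta ^+ j * E.
    by apply: mulr_ge0; [exact: exprn_ge0 (ltW b0) | exact: p_ge0].
  lra.
set y := T th - th.
set S := Cs * Num.sqrt m%:R.
have S0 : 0 <= S by rewrite mulr_ge0 ?sqrtr_ge0.
have hy k : p y <= 2 * S * G k.
  have -> : y = (T th - T (x k)) + (x k.+1 - th).
    by rewrite /y /x iterS addrA subrK.
  apply: le_trans (ptri _ _) _.
  have h1 : p (T th - T (x k)) <= S * G k.
    apply: le_trans (pcontr _ _) _.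
    have h3 : Cs * norm2 (th - x k) <= Cs * (Num.sqrt m%:R * G k).
      by apply: ler_wpM2l => //; exact: nb.
    have h4 : beta * p (th - x k) <= p (th - x k) by rewrite ler_piMl ?p_ge0 ?ltW.
    have := phi (th - x k); rewrite /S -mulrA; lra.
  have h2 : p (x k.+1 - th) <= S * G k.
    have h3 : Cs * norm2 (x k.+1 - th) <= Cs * (Num.sqrt m%:R * G k).
      apply: ler_wpM2l => //; apply: le_trans (nb _ k.+1 (hc' k.+1)) _.
      by apply: ler_wpM2l; [exact: sqrtr_ge0 | exact: Gdec].
    have := phi (x k.+1 - th); rewrite /S -mulrA; lra.
  lra.
have py : p y = 0.
  apply: small0; first exact: p_ge0.
  move=> e e0.
  set Kc := 2 * S * (E / (1 - beta)) + 1.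
  have Kc0 : 0 < Kc.
    rewrite /Kc; have : 0 <= 2 * S * (E / (1 - beta)).
      apply: mulr_ge0; first by rewrite mulr_ge0.
      by apply: divr_ge0; [exact: p_ge0 | rewrite subr_ge0 ltW].
    lra.
  have [N hN] := geo_small (ltW b0) b1 (divr_gt0 e0 Kc0).
  apply: le_trans (hy N) _.
  have hb := hN N (leqnn N).
  have : 2 * S * G N <= Kc * beta ^+ N.
    have eG : 2 * S * G N = 2 * S * (E / (1 - beta)) * beta ^+ N by rewrite /G; ring.
    rewrite eG /Kc; have := exprn_ge0 N (ltW b0); nra.
  move=> h; apply: le_trans h _.
  by rewrite mulrC -ler_pdivlMr.
have : norm2 y <= 0 by rewrite -py plo.
move=> hn; have : norm2 y = 0 by apply/eqP; rewrite eq_le hn norm2_ge0.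
by move/norm2_eq0/eqP; rewrite subr_eq0 => /eqP.
Qed.

End FP.

Unset Implicit Arguments.

Theorem theorem1 (R : realType) (nS nA m : nat)
  (P : 'M[R]_(nA.+1 * nS, nS)) (r : 'I_(nA.+1 * nS) -> 'I_nS -> R)
  (gamma : R) (Phi : 'M[R]_(nA.+1 * nS, m)) (d : 'I_(nA.+1 * nS) -> R)
  (alpha eps : R) :
  (forall k s', 0 <= P k s') ->
  (forall k, \sum_(s' < nS) P k s' = 1) ->
  0 < gamma -> gamma < 1 ->
  \rank Phi = m ->
  (forall k, 0 < d k) -> \sum_k d k = 1 ->
  0 < alpha -> alpha < 1 ->
  rho_dir P gamma Phi d alpha < 1 ->
  0 < eps ->
  let beta := rho_dir P gamma Phi d alpha + eps in
  beta < 1 ->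
  let V := Vinf P gamma Phi d alpha beta in
  let p := fun x => Num.sqrt (V x) in
  let A := Amu P gamma Phi d alpha in
  let T := Talpha P r gamma Phi d alpha in
  let g := gres P r gamma Phi d in
  (* (i) *)
  (forall x : 'cV[R]_m, cvgn (fun t => Vt P gamma Phi d alpha beta t x)) /\
  exists C : R, 1 <= C /\
  (forall x, norm2sq x <= V x /\ V x <= C * norm2sq x) /\
  (* (ii) *)
  is_norm p /\
  (* (iii) *)
  (forall mu, is_stoch_policy mu -> forall x,
     V (A mu *m x) <= beta ^+ 2 * (V x - norm2sq x) /\
     beta ^+ 2 * (V x - norm2sq x) <= beta ^+ 2 * V x /\
     p (A mu *m x) <= beta * p x) /\
  (* (iv) *)
  (forall th th', p (T th - T th') <= beta * p (th - th')) /\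
  (* (v) and (vi) *)
  exists thstar, g thstar = 0 /\ (forall th, g th = 0 -> th = thstar) /\
  forall (th0 : 'cV[R]_m) (k : nat),
    V (iter k T th0 - thstar) <= beta ^+ (2 * k) * V (th0 - thstar) /\
    norm2 (iter k T th0 - thstar)
      <= Num.sqrt C * beta ^+ k * norm2 (th0 - thstar) /\
    norm2 (Phi *m iter k T th0 - Phi *m thstar)
      <= opnorm2 Phi * Num.sqrt C * beta ^+ k * norm2 (th0 - thstar).
Proof.
move=> hP1 hP2 g0 g1 rk hd hds a0 a1 hrho e0 beta hb V p A T g.
have bge0 := bb_ge0 P gamma Phi d alpha.
have b01 := bb0 P gamma Phi d alpha.
have bsub := bb_sub P gamma Phi d alpha.
have rho0 : 0 <= rho_dir P gamma Phi d alpha := jsr_ge0 bge0 b01 bsub.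
have bp : 0 < beta by rewrite /beta; lra.
have rb : rho_dir P gamma Phi d alpha < beta by rewrite /beta ltrDl.
have [rho [K [r0 r1 K0 hbb]]] := jsr_geo bge0 b01 bsub bp rb.
set C := CC rho K.
have C1 : 1 <= C := CC_ge1 K r0 r1.
have Vge x : norm2sq x <= V x := VI_ge bp r0 r1 K0 hbb x.
have Vle x : V x <= C * norm2sq x := VI_bound bp r0 r1 K0 hbb x.
have V0 x : 0 <= V x := le_trans (norm2sq_ge0 x) (Vge x).
have sq_le a b : 0 <= b -> a <= beta ^+ 2 * b -> Num.sqrt a <= beta * Num.sqrt b.
  move=> b0 h; rewrite -(ger0_norm (ltW bp)) -sqrtr_sqr -sqrtrM ?sqr_ge0 //.
  by rewrite ler_sqrt // mulr_ge0 ?sqr_ge0.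
have hiii : forall mu, is_stoch_policy mu -> forall x,
     V (A mu *m x) <= beta ^+ 2 * (V x - norm2sq x) /\
     beta ^+ 2 * (V x - norm2sq x) <= beta ^+ 2 * V x /\
     p (A mu *m x) <= beta * p x.
  move=> mu hmu x.
  have h := VI_shift bp r0 r1 K0 hbb (Q_stoch P gamma Phi d alpha hmu) x.
  have h2 : beta ^+ 2 * (V x - norm2sq x) <= beta ^+ 2 * V x.
    by apply: ler_wpM2l; [exact: sqr_ge0 | have := norm2sq_ge0 x; lra].
  split; first exact: h.
  split; first exact: h2.
  by apply: sq_le => //; exact: le_trans h h2.
have hiv : forall th th', p (T th - T th') <= beta * p (th - th').
  move=> th th'; have [mu [hmu e]] := Tdiff P r gamma Phi d alpha th th'.
  rewrite /T e; exact: (hiii mu hmu (th - th')).2.2.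
have ptri x y : p (x + y) <= p x + p y := VI_tri bp r0 r1 K0 hbb x y.
have plo x : norm2 x <= p x by rewrite /norm2 /p ler_sqrt.
have phi x : p x <= Num.sqrt C * norm2 x.
  by rewrite /p /norm2 -sqrtrM ?(le_trans ler01 C1) // ler_sqrt // mulr_ge0 ?norm2sq_ge0 // (le_trans ler01 C1).
have [ths hfix] := fixed_exists bp hb (sqrtr_ge0 C) ptri hiv plo phi.
have pz x : p x = 0 -> x = 0.
  move=> h; apply: (VI_eq0 bp r0 r1 K0 hbb); apply/eqP; rewrite eq_le V0 andbT.
  by rewrite -sqrtr_eq0; apply/eqP.
split.
  move=> x; exact: (VT_cvg bp r0 r1 K0 hbb (x := x)).
exists C; split; first exact: C1.
split; first by move=> x; split; [exact: Vge | exact: Vle].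
split.
  split.
  - by move=> x; exact: sqrtr_ge0.
  - exact: pz.
  - move=> c x; have e := VI_scale bp r0 r1 K0 hbb c x; rewrite /VI in e.
    by rewrite /p /V e sqrtrM ?sqr_ge0 // sqrtr_sqr.
  - exact: ptri.
split; first exact: hiii.
split; first exact: hiv.
have gT th : T th = th + alpha *: g th by [].
exists ths; split.
  have e : alpha *: g ths = 0 by apply: (addrI ths); rewrite addr0 -gT hfix.
  move/eqP: e; rewrite scaler_eq0 => /orP [/eqP ea|/eqP //].
  by move: a0; rewrite ea ltxx.
split.
  move=> th hg.
  have Tth : T th = th by rewrite gT hg scaler0 addr0.
  have h := hiv th ths; rewrite Tth hfix in h.
  apply/eqP; rewrite -subr_eq0; apply/eqP; apply: pz.
  apply/eqP; rewrite eq_le sqrtr_ge0 andbT.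
  have : 0 <= p (th - ths) := sqrtr_ge0 _.
  move: h; set z := p (th - ths) => h h0.
  have : (1 - beta) * z <= 0 by rewrite mulrBl mul1r subr_le0.
  by rewrite pmulr_rle0 // subr_gt0.
move=> th0 k.
have hV : V (iter k T th0 - ths) <= beta ^+ (2 * k) * V (th0 - ths).
  elim: k => [|k IH]; first by rewrite muln0 expr0 mul1r.
  rewrite iterS -{1}hfix.
  have [mu [hmu e]] := Tdiff P r gamma Phi d alpha (iter k T th0) ths.
  rewrite /T e -/T.
  have [h1 [h2 _]] := hiii mu hmu (iter k T th0 - ths).
  apply: le_trans (le_trans h1 h2) _.
  by rewrite mulnS exprD -mulrA ler_wpM2l ?sqr_ge0.
have hn : norm2 (iter k T th0 - ths) <= Num.sqrt C * beta ^+ k * norm2 (th0 - ths).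
  apply: le_trans (plo _) _.
  rewrite /p.
  have : V (iter k T th0 - ths) <= (beta ^+ k) ^+ 2 * (C * norm2sq (th0 - ths)).
    apply: le_trans hV _; rewrite -exprM mulnC; apply: ler_wpM2l; [exact: exprn_ge0 (ltW bp) | exact: Vle].
  move=> h; apply: le_trans (_ : _ <= Num.sqrt ((beta ^+ k) ^+ 2 * (C * norm2sq (th0 - ths)))) _.
    by rewrite ler_sqrt // mulr_ge0 ?sqr_ge0 // mulr_ge0 ?norm2sq_ge0 // (le_trans ler01 C1).
  rewrite sqrtrM ?sqr_ge0 // sqrtr_sqr sqrtrM ?(le_trans ler01 C1) //.
  rewrite ger0_norm; last exact: exprn_ge0 (ltW bp).
  by rewrite /norm2 mulrA (mulrC (beta ^+ k)).
split; first exact: hV.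
split; first exact: hn.
rewrite -mulmxBr; apply: le_trans (opn_bound _ _) _.
rewrite -!mulrA; apply: ler_wpM2l; first exact: opn_ge0.
by rewrite mulrA.
Qed.
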